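(* Let $\{X_n\}_{n=-\infty}^{\infty}$ be a stationary time series taking values in a finite alphabet $\mathcal{X}$. For $k\ge1$, $n\ge0$ and $j\ge0$, define the time series $\{\tilde X^{(k,n,j)}_i\}_{i=-\infty}^{\infty}$ by $\tilde X^{(k,n,j)}_i=X_{n-\tau^k_j(n)+i}$ for $-\infty<i<\infty$. Then $\{\tilde X^{(k,n,j)}_i\}_{i=-\infty}^{\infty}$ has the same distribution as $\{X_i\}_{i=-\infty}^{\infty}$.
   Context: Notation: $X_m^n=(X_m,\dots,X_n)$. For $k\ge1$ and $n\ge0$, $\tau^k_0(n)=0$ and for $i\ge1$, $\tau^k_i(n)=\min\{t>\tau^k_{i-1}(n): X_{n-k+1-t}^{n-t}=X_{n-k+1}^n\}$, i.e. the successive times $t>0$ going backward at which the block $X_{n-k+1}^n$ reoccurs ending at position $n-t$. *)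

(* Defs.v *)
From HB Require Import structures.
From mathcomp Require Import all_boot all_order all_algebra.
From mathcomp Require Import all_classical all_reals.
From mathcomp Require Import ereal measure probability.
Set Implicit Arguments. Unset Strict Implicit. Unset Printing Implicit Defensive.
Import Order.TTheory GRing.Theory Num.Theory.
Local Open Scope classical_set_scope.
Local Open Scope ring_scope.

Section Defs.
Context {T : Type} {A : eqType}.

Definition cyl (X : int -> T -> A) (s : seq (int * A)) : set T :=
  [set w | all (fun p => X p.1 w == p.2) s].

Definition block_match (X : int -> T -> A) (k n t : nat) (w : T) : Prop :=
  forall l : nat, (l < k)%N ->
    X (n%:Z - t%:Z - l%:Z) w = X (n%:Z - l%:Z) w.

(* is_tau X k n w j t  <->  tau^k_j(n) = t at outcome w (recursive min definition) *)
Inductive is_tau (X : int -> T -> A) (k n : nat) (w : T) : nat -> nat -> Prop :=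
| is_tau0 : is_tau X k n w 0 0
| is_tauS (j s t : nat) :
    is_tau X k n w j s -> (s < t)%N -> block_match X k n t w ->
    (forall u : nat, (s < u)%N -> (u < t)%N -> ~ block_match X k n u w) ->
    is_tau X k n w j.+1 t.
End Defs.

Definition stationary (d : measure_display) (T : measurableType d) (R : realType)
  (P : probability T R) (A : eqType) (X : int -> T -> A) : Prop :=
  forall (s : seq (int * A)) (m : int),
    P (cyl (fun i => X (i + m)) s) = P (cyl X s).

(* Main.v *)
Require Import Defs.
From HB Require Import structures.
From mathcomp Require Import all_boot all_order all_algebra.
From mathcomp Require Import all_classical all_reals.
From mathcomp Require Import ereal measure probability.
From mathcomp Require Import zify ring lra.
Import Order.TTheory GRing.Theory Num.Theory.
Set Implicit Arguments. Unset Strict Implicit. Unset Printing Implicit Defensive.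
Local Open Scope classical_set_scope.
Local Open Scope ring_scope.


Section Comb.
Variables (A : eqType) (k : nat).

Definition beq (p : int -> A) (a b : int) : bool :=
  all (fun l : nat => p (a - l%:Z) == p (b - l%:Z)) (iota 0 k).

Lemma beqP p a b : reflect (forall l : nat, (l < k)%N -> p (a - l%:Z) = p (b - l%:Z)) (beq p a b).
Proof.
apply: (iffP allP) => H l.
  by move=> lk; apply/eqP/H; rewrite mem_iota.
by rewrite mem_iota add0n => /andP[_ lk]; apply/eqP/H.
Qed.

Lemma beq_refl p a : beq p a a.
Proof. by apply/beqP. Qed.

Lemma beq_sym p a b : beq p a b = beq p b a.
Proof. by apply/beqP/beqP => H l lk; rewrite H. Qed.

Lemma beq_trans_l p a b c : beq p b c -> beq p a b = beq p a c.
Proof.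
move/beqP=> H; apply/beqP/beqP => H' l lk; first by rewrite H' // H.
by rewrite H' // H.
Qed.

Lemma beq_trans p a b c : beq p a b -> beq p b c -> beq p a c.
Proof. by move=> ab bc; rewrite -(beq_trans_l a bc). Qed.

Lemma beq_shift p m a b : beq (fun z => p (z + m)) a b = beq p (a + m) (b + m).
Proof.
apply: eq_all => l /=.
have E x y : x - y + m = x + m - y by rewrite addrAC.
by rewrite !E.
Qed.

Definition C p (m : int) (t : nat) :=
  count (fun u : nat => beq p (m - u%:Z) m) (iota 1 t).

Lemma C_split p m a b :
  C p m (a + b) = (C p m a + count (fun u : nat => beq p (m - u%:Z) m) (iota a.+1 b))%N.
Proof. by rewrite /C iotaD count_cat add1n. Qed.

Lemma count_shift p m a b : beq p (m - a%:Z) m ->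
  count (fun u : nat => beq p (m - u%:Z) m) (iota a.+1 b) = C p (m - a%:Z) b.
Proof.
move=> h; rewrite -addn1 iotaDl count_map /C; apply: eq_count => v /=.
have -> : m - (a + v)%:Z = m - a%:Z - v%:Z by rewrite PoszD opprD addrA.
by rewrite (beq_trans_l _ h).
Qed.

Lemma C_add p m a b : beq p (m - a%:Z) m -> C p m (a + b) = (C p m a + C p (m - a%:Z) b)%N.
Proof. by move=> h; rewrite C_split count_shift. Qed.

Lemma C0 p m : C p m 0 = 0%N.
Proof. by []. Qed.

Lemma CS p m t : C p m t.+1 = (C p m t + beq p (m - t.+1%:Z) m)%N.
Proof. by rewrite -addn1 C_split /= addn0 addn1. Qed.

End Comb.

Section Tau.
Variables (T : Type) (A : eqType) (X : int -> T -> A) (k : nat).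

Definition pw (w : T) : int -> A := fun i => X i w.

Lemma bmE (m : nat) t w : block_match X k m t w <-> beq k (pw w) (m%:Z - t%:Z) m.
Proof. by split => [H|/beqP H]; [apply/beqP|]. Qed.

Lemma tau_C (m : nat) w j t : is_tau X k m w j t ->
  C k (pw w) m t = j /\ (t = 0%N \/ beq k (pw w) (m%:Z - t%:Z) m).
Proof.
elim=> [|j' s t' Hs [IH _] st bm nm]; first by split; [|left].
split; last by right; apply/bmE.
have t'E : t' = (t' - 1).+1 by lia.
rewrite t'E CS -t'E (_ : beq _ _ _ _ = true); last exact/bmE.
have -> : (t' - 1 = s + (t' - 1 - s))%N by lia.
rewrite C_split IH (_ : count _ _ = 0%N) ?addn0 ?addn1 //.
apply/eqP; rewrite -leqn0 leqNgt -has_count; apply/hasP => -[u].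
rewrite mem_iota => /andP[su ut] /bmE; apply: nm; lia.
Qed.

Lemma tau_inv (m : nat) w t : exists s, (s <= t)%N /\ is_tau X k m w (C k (pw w) m t) s /\
  forall u, (s < u)%N -> (u <= t)%N -> ~~ beq k (pw w) (m%:Z - u%:Z) m.
Proof.
elim: t => [|t [s [st [Hs nm]]]].
  by exists 0%N; split => //; split; [exact: is_tau0|move=> u; lia].
rewrite CS; case: (boolP (beq _ _ _ _)) => b.
  exists t.+1; split => //; split; last by move=> u; lia.
  rewrite addn1; apply: (is_tauS Hs); first by rewrite ltnS.
    exact/bmE.
  by move=> u su ut /bmE; apply/negP/nm => //; lia.
exists s; rewrite addn0; split; first lia; split => // u su.
rewrite leq_eqVlt => /orP[/eqP->//|]; rewrite ltnS; exact: nm.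
Qed.

Lemma C_tau (m : nat) w j t : C k (pw w) m t = j ->
  (t = 0%N \/ beq k (pw w) (m%:Z - t%:Z) m) -> is_tau X k m w j t.
Proof.
move=> Cj ht; have [s [st [Hs nm]]] := tau_inv m w t.
rewrite Cj in Hs; case: ht => [t0|b].
  have s0 : s = 0%N by lia. by rewrite t0 -s0.
have [st_eq|lts] : s = t \/ (s < t)%N by lia. by rewrite -st_eq.
by move: (nm t lts (leqnn t)); rewrite b.
Qed.

Lemma tau_uniq (m : nat) w j t t' : is_tau X k m w j t -> is_tau X k m w j t' -> t = t'.
Proof.
wlog : t t' / (t <= t')%N.
  move=> H H1 H2; have [/H|/ltnW/H] := leqP t t'; first by apply.
  by move=> H'; symmetry; apply: H'.
move=> tt' /tau_C [Ct _] /tau_C [Ct' [t0|b]].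
  lia.
have [//|lt] : t = t' \/ (t < t')%N by lia.
move: Ct'; have -> : t' = (t + (t' - t))%N by lia.
rewrite C_split Ct => /eqP; rewrite -{2}[j]addn0 eqn_add2l eqn0Ngt -has_count.
move=> /negP H; exfalso; apply: H; apply/hasP; exists t' => //.
by rewrite mem_iota; lia.
Qed.

Lemma tau_ext (T' : Type) (Y : int -> T' -> A) m m' w w' j t :
  (forall u, (u <= t)%N -> (block_match X k m u w <-> block_match Y k m' u w')) ->
  is_tau X k m w j t -> is_tau Y k m' w' j t.
Proof.
move=> H Ht; elim: Ht H => [|j' s t' Hs IH st bm nm] H; first exact: is_tau0.
have IH' : is_tau Y k m' w' j' s.
  by apply: IH => u us; apply: H; apply: leq_trans us (ltnW st).
apply: (is_tauS IH' st).
- by apply/(H t' (leqnn _)).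
- move=> u su ut hb; apply: (nm u su ut); apply/(H u (ltnW ut)). exact: hb.
Qed.

End Tau.

Definition local (A : Type) (a : int) (L : nat) (Q : (int -> A) -> Prop) :=
  forall p q : int -> A, (forall i : nat, (i < L)%N -> p (a + i%:Z) = q (a + i%:Z)) -> Q p -> Q q.

Section Loc.
Variables (d : measure_display) (T : measurableType d) (R : realType)
  (P : probability T R) (A : finType).

Lemma cyl_meas (Y : int -> T -> A) (hY : forall i a, measurable (Y i @^-1` [set a]))
  s : measurable (cyl Y s).
Proof.
elim: s => [|p s IH].
  by rewrite (_ : cyl Y [::] = setT) //; apply/seteqP; split.
rewrite (_ : cyl Y (p :: s) = Y p.1 @^-1` [set p.2] `&` cyl Y s).
  exact: measurableI.
apply/seteqP; split => w /=; rewrite /cyl /=.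
  by move=> /andP[/eqP h1 h2].
by move=> [/= -> h2]; rewrite eqxx.
Qed.

Variables (a0 : A) (a : int) (L : nat).

Definition ext (f : {ffun 'I_L -> A}) : int -> A := fun i =>
  if (a <= i) then (if insub (absz (i - a)) is Some j then f j else a0) else a0.

Definition sf (f : {ffun 'I_L -> A}) : seq (int * A) :=
  [seq (a + (nat_of_ord j)%:Z, f j) | j <- enum 'I_L].

Lemma ext_win f (i : 'I_L) : ext f (a + (nat_of_ord i)%:Z) = f i.
Proof.
rewrite /ext lerDl /= (_ : absz (a + (nat_of_ord i)%:Z - a)%R = nat_of_ord i); last first.
  by rewrite addrAC subrr add0r absz_nat.
by rewrite valK.
Qed.

Lemma mem_cyl_sf (Y : int -> T -> A) f w :
  cyl Y (sf f) w <-> forall j : 'I_L, Y (a + (nat_of_ord j)%:Z) w = f j.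
Proof.
rewrite /cyl /sf /= all_map; split.
  by move=> /allP H j; apply/eqP; apply: (H j); rewrite mem_enum.
by move=> H; apply/allP => j _ /=; rewrite H.
Qed.

Lemma decomp (Y : int -> T -> A) (Q : (int -> A) -> Prop) : local a L Q ->
  [set w | Q (fun i => Y i w)] = \bigcup_(f in [set f | Q (ext f)]) cyl Y (sf f).
Proof.
move=> hQ; apply/seteqP; split => w /=.
  move=> HQ; exists [ffun j => Y (a + (nat_of_ord j)%:Z) w].
    apply: hQ HQ => i iL; have -> := ext_win _ (Ordinal iL).
    by rewrite ffunE.
  by apply/mem_cyl_sf => j; rewrite ffunE.
move=> [f Qf /mem_cyl_sf cf]; apply: hQ Qf => i iL.
by rewrite (ext_win _ (Ordinal iL)) -(cf (Ordinal iL)).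
Qed.

Lemma triv_sf (Y : int -> T -> A) (D : set {ffun 'I_L -> A}) :
  trivIset D (fun f => cyl Y (sf f)).
Proof.
move=> f g _ _ [w [/mem_cyl_sf cf /mem_cyl_sf cg]].
by apply/ffunP => j; rewrite -cf -cg.
Qed.

Lemma loc_meas (Y : int -> T -> A) (hY : forall i a, measurable (Y i @^-1` [set a]))
  Q : local a L Q -> measurable [set w | Q (fun i => Y i w)].
Proof.
move=> hQ; rewrite (decomp _ hQ); apply: fin_bigcup_measurable.
  exact: finite_finset.
by move=> f _; apply: cyl_meas.
Qed.

Lemma loc_sum (Y : int -> T -> A) (hY : forall i a, measurable (Y i @^-1` [set a]))
  Q : local a L Q -> P [set w | Q (fun i => Y i w)] =
    (\sum_(f \in [set f | Q (ext f)]) P (cyl Y (sf f)))%E.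
Proof.
move=> hQ; rewrite (decomp _ hQ) measure_fin_bigcup //.
- exact: finite_finset.
- exact: triv_sf.
- by move=> f _; apply: cyl_meas.
Qed.

End Loc.

Section Main.
Variables (d : measure_display) (T : measurableType d) (R : realType)
  (P : probability T R) (A : finType) (X : int -> T -> A)
  (hmeas : forall (i : int) (a : A), measurable (X i @^-1` [set a]))
  (hstat : stationary P X) (k : nat).

Lemma hmeas_sh (m : int) : forall i a, measurable ((fun i => X (i + m)) i @^-1` [set a]).
Proof. by move=> i a; apply: hmeas. Qed.

Lemma empty_sets (nT : ~ (exists w : T, True)) (S1 S2 : set T) : S1 = S2.
Proof. by apply/seteqP; split => w; exfalso; apply: nT; exists w. Qed.

Lemma loc_measX Q a L (m : int) : local a L Q ->
  measurable [set w | Q (fun i => X (i + m) w)].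
Proof.
move=> hQ; case: (pselect (exists w : T, True)) => [[w _]|nT].
  exact: (loc_meas (X 0 w) (hmeas_sh m) hQ).
by rewrite (empty_sets nT [set w | Q (fun i => X (i + m) w)] set0).
Qed.

Lemma loc_measX0 Q a L : local a L Q ->
  measurable [set w | Q (fun i => X i w)].
Proof.
move=> hQ; case: (pselect (exists w : T, True)) => [[w _]|nT].
  exact: (loc_meas (X 0 w) hmeas hQ).
by rewrite (empty_sets nT [set w | Q (fun i => X i w)] set0).
Qed.

Lemma loc_stat Q a L (m : int) : local a L Q ->
  P [set w | Q (fun i => X (i + m) w)] = P [set w | Q (fun i => X i w)].
Proof.
move=> hQ; case: (pselect (exists w : T, True)) => [[w _]|nT].
  rewrite (loc_sum P (X 0 w) (hmeas_sh m) hQ) (loc_sum P (X 0 w) hmeas hQ).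
  by apply: eq_fsbigr => f _; apply: hstat.
by rewrite (empty_sets nT [set w | Q (fun i => X (i + m) w)] [set w | Q (fun i => X i w)]).
Qed.

End Main.

Arguments loc_measX {d T A X} hmeas {Q a L m}.
Arguments loc_stat {d T R P A X} hmeas hstat {Q a L} m.
Arguments loc_measX0 {d T A X} hmeas {Q a L}.

Lemma win (A : Type) (p q : int -> A) a L :
  (forall i : nat, (i < L)%N -> p (a + i%:Z) = q (a + i%:Z)) ->
  forall z, a <= z -> z < a + L%:Z -> p z = q z.
Proof.
move=> H z az zL.
have -> : z = a + (absz (z - a))%:Z by rewrite gez0_abs ?subr_ge0 // addrCA subrr addr0.
apply: H; lia.
Qed.

Lemma nat_bound (R : realType) (x : \bar R) : (0 <= x)%E ->
  (forall M : nat, (x *+ M.+1 <= 1)%E) -> x = 0%E.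
Proof.
move=> x0 H.
have fx : x \is a fin_num.
  rewrite ge0_fin_numE //; apply: (le_lt_trans (H 0%N)); exact: ltey.
rewrite -(fineK fx) in x0 H *; move: (fine x) x0 H => r; rewrite lee_fin => r0 H.
congr (_%:E); apply/eqP; rewrite eq_le r0 andbT leNgt; apply/negP => rp.
have := H (Num.Def.archi_bound r^-1); rewrite -EFin_natmul lee_fin.
apply/negP; rewrite -ltNge -mulr_natr.
rewrite -[X in X < _](mulfV (lt0r_neq0 rp)) ltr_pM2l //.
apply: (lt_le_trans (archi_boundP _)); first by rewrite invr_ge0 ltW.
by rewrite ler_nat.
Qed.

Section Poinc.
Variables (d : measure_display) (T : measurableType d) (R : realType)
  (P : probability T R) (A : finType) (X : int -> T -> A)
  (hmeas : forall (i : int) (a : A), measurable (X i @^-1` [set a]))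
  (hstat : stationary P X) (k : nat).

Definition blk (p : int -> A) : {ffun 'I_k -> A} := [ffun l : 'I_k => p (- (nat_of_ord l)%:Z)].
Definition QN (b : {ffun 'I_k -> A}) (M : nat) (p : int -> A) : Prop :=
  blk p = b /\ forall u : nat, (0 < u)%N -> (u <= M)%N -> ~~ beq k p 0 u%:Z.
Definition QI (b : {ffun 'I_k -> A}) (p : int -> A) : Prop :=
  blk p = b /\ forall u : nat, (0 < u)%N -> ~~ beq k p 0 u%:Z.

Lemma QN_local b M : local (- k%:Z) (k + M + 1) (QN b M).
Proof.
move=> p q H [bp nm]; have W := win H; split.
  rewrite -bp; apply/ffunP => l; rewrite !ffunE; symmetry; apply: W.
    by have := ltn_ord l; lia.
  by have := ltn_ord l; lia.
move=> u u0 uM; rewrite (_ : beq k q 0 u = beq k p 0 u); first exact: nm.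
apply: eq_in_all => l; rewrite mem_iota => /andP[_ lk] /=.
by rewrite !W //; lia.
Qed.
Arguments QN_local : clear implicits.

Lemma QN_disj b M (i j : nat) w : (i < j)%N -> (j <= M)%N ->
  QN b M (fun z => X (z + i%:Z) w) -> QN b M (fun z => X (z + j%:Z) w) -> False.
Proof.
move=> ij jM [bi nmi] [bj _].
have /negP := nmi (j - i)%N ltac:(lia) ltac:(lia); apply; apply/beqP => l lk.
have := congr1 (fun f : {ffun 'I_k -> A} => f (Ordinal lk)) (etrans bi (esym bj)).
rewrite !ffunE /= => E.
rewrite (_ : 0 - l%:Z + i%:Z = - l%:Z + i%:Z); last by lia.
by rewrite E; congr (X _ w); lia.
Qed.

Lemma negl_QI b (m : int) : P.-negligible [set w | QI b (fun z => X (z + m) w)].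
Proof.
pose Z := \bigcap_M [set w | QN b M.+1 (fun z => X (z + m) w)].
have mZ : measurable Z.
  by apply: bigcapT_measurable => M; exact: (loc_measX hmeas (QN_local b M.+1)).
exists Z; split => //; last first.
  by move=> w [bw nm] M _; split => // u u0 _; exact: nm.
apply: nat_bound => // M.
pose F (i : nat) := [set w | QN b M.+1 (fun z => X (z + i%:Z) w)].
have mF i : measurable (F i) by rewrite /F; exact: (loc_measX hmeas (QN_local b M.+1)).
have cF i : P (F i) = P [set w | QN b M.+1 (fun z => X z w)].
  exact: (loc_stat hmeas hstat i%:Z (QN_local b M.+1)).
have xle : (P Z <= P [set w | QN b M.+1 (fun z => X z w)])%E.
  rewrite -(loc_stat hmeas hstat m (QN_local b M.+1)).
  apply: le_measure; rewrite ?inE //; first exact: (loc_measX hmeas (QN_local b M.+1)).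
  by move=> w /(_ M I).
have tF : trivIset `I_M.+1 F.
  move=> i j /= iM jM [w [Fi Fj]].
  rewrite /F /= in Fi Fj.
  case: (ltngtP i j) => // [ij|ji]; exfalso.
    exact: (QN_disj ij (ltnW jM) Fi Fj).
  exact: (QN_disj ji (ltnW iM) Fj Fi).
have mU : measurable (\big[setU/set0]_(i < M.+1) F i).
  by apply: bigsetU_measurable => i _; apply: mF.
have hsum := measure_semi_additive_ord_I P (fun i _ => mF i) tF mU.
have le1 := probability_le1 P mU; rewrite hsum in le1.
apply: le_trans le1.
have -> : (P Z *+ M.+1 = \sum_(i < M.+1) P Z)%E by rewrite sumr_const card_ord.
by apply: lee_sum => i _; apply: (le_trans xle); rewrite le_eqVlt; apply/orP; left; apply/eqP; symmetry; exact: (cF i).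
Qed.

End Poinc.

Lemma C_first (A : eqType) k (p : int -> A) (m : int) (v : nat) : (0 < v)%N ->
  beq k p m (m + v%:Z) ->
  (forall x : nat, (0 < x)%N -> (x < v)%N -> ~~ beq k p m (m + x%:Z)) ->
  C k p (m + v%:Z) v = 1%N.
Proof.
case: v => // v _ b nm; rewrite CS addrK b.
rewrite (_ : C k p (m + v.+1%:Z) v = 0%N) //.
apply/eqP; rewrite -leqn0 leqNgt -has_count; apply/hasP => -[x].
rewrite mem_iota => /andP[x1 xv] bx.
have := nm (v.+1 - x)%N ltac:(lia) ltac:(lia); apply/negP/negPn.
rewrite (_ : m + (v.+1 - x)%N%:Z = m + v.+1%:Z - x%:Z); last by lia.
by rewrite (beq_trans_l _ bx).
Qed.

Lemma in_bigsetU (T : Type) (I : eqType) (F : I -> set T) (s : seq I) (i : I) :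
  i \in s -> F i `<=` \big[setU/set0]_(j <- s) F j.
Proof.
elim: s => // a s IH; rewrite inE big_cons => /orP[/eqP->|/IH H] w Fw.
  by left. by right; apply: H.
Qed.

Lemma negl_bigsetU d (T : measurableType d) (R : realType) (P : probability T R)
  (I : Type) (F : I -> set T) (s : seq I) :
  (forall i, P.-negligible (F i)) -> P.-negligible (\big[setU/set0]_(j <- s) F j).
Proof.
move=> H; elim: s => [|a s IH]; first by rewrite big_nil; apply: negligible_set0.
by rewrite big_cons; apply: negligibleU.
Qed.

Section Poinc2.
Variables (d : measure_display) (T : measurableType d) (R : realType)
  (P : probability T R) (A : finType) (X : int -> T -> A)
  (hmeas : forall (i : int) (a : A), measurable (X i @^-1` [set a]))
  (hstat : stationary P X) (k : nat).

Definition Good j (m : nat) (w : T) := exists t : nat, is_tau X k (m + t)%N w j t.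

Lemma good_char j (m t : nat) w : is_tau X k (m + t)%N w j t <->
  C k (pw X w) (m%:Z + t%:Z) t = j /\ (t = 0%N \/ beq k (pw X w) m (m%:Z + t%:Z)).
Proof.
have E : ((m + t)%N%:Z - t%:Z) = m%:Z by rewrite PoszD addrK.
split => [H|[h1 h2]]; first by have := tau_C H; rewrite E PoszD.
by apply: C_tau; rewrite ?E PoszD.
Qed.

Lemma negl_bad0 m : P.-negligible [set w | ~ Good 0 m w].
Proof.
apply: (negligibleS _ (negligible_set0 P)) => w /= nG; apply: nG.
by exists 0%N; rewrite addn0; exact: is_tau0.
Qed.

Lemma bad1 (m : nat) : [set w | ~ Good 1 m w] `<=`
  \big[setU/set0]_(b <- enum {ffun 'I_k -> A}) [set w | QI b (fun z => X (z + m%:Z) w)].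
Proof.
move=> w nG; apply: (@in_bigsetU _ _ _ _ (blk k (fun z => X (z + m%:Z) w))).
  by rewrite mem_enum.
split => // u u0; apply/negP => bu; apply: nG.
rewrite (@beq_shift _ k (pw X w) m%:Z 0 u) add0r addrC in bu.
have exP : exists v, (0 < v)%N && beq k (pw X w) m (m%:Z + v%:Z).
  by exists u; rewrite u0.
case: (ex_minnP exP) => v /andP[v0 bv] vmin.
exists v; apply/good_char; split; last by right.
apply: C_first => // x x0 xv; apply/negP => bx.
by have := vmin x; rewrite x0 bx /= => /(_ isT); lia.
Qed.

Lemma negl_bad1 m : P.-negligible [set w | ~ Good 1 m w].
Proof.
have H1 := bad1 (m:=m). have H2 : P.-negligible (\big[setU/set0]_(b <- enum {ffun 'I_k -> A}) [set w | QI b (fun z => X (z + m%:Z) w)]). apply: negl_bigsetU => b. exact: (negl_QI hmeas hstat). exact: (negligibleS H1 H2).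
Qed.

Lemma badS j m : [set w | ~ Good j.+1 m w] `<=`
  [set w | ~ Good j m w] `|` \bigcup_t [set w | ~ Good 1 (m + t)%N w].
Proof.
move=> w nG; case: (pselect (Good j m w)) => [[t Ht]|nGj]; last by left.
right; exists t => //= -[u Hu]; apply: nG.
move/good_char: Ht => [Ct bt].
move/good_char: Hu => [Cu [u0|bu]].
  by move: Cu; rewrite u0 C0.
exists (t + u)%N; apply/good_char; rewrite PoszD in Cu bu.
rewrite !PoszD addrA addnC (C_add _ _ (a := u)); last by rewrite addrK.
rewrite addrK Cu Ct add1n; split => //; right.
case: bt => [t0|bt].
  by move: bu; rewrite t0 addr0.
exact: beq_trans bt bu.
Qed.

Lemma negl_bad j m : P.-negligible [set w | ~ Good j m w].
Proof.
elim: j m => [|j IH] m; first exact: negl_bad0.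
apply: (negligibleS (badS (j:=j) (m:=m))); apply: negligibleU; first exact: IH.
by apply: negligible_bigcup => t; apply: negl_bad1.
Qed.

End Poinc2.

Unset Implicit Arguments.

Lemma sumn_bound (A : eqType) (s : seq (int * A)) q : q \in s ->
  (absz q.1 <= sumn (map (fun q : int * A => absz q.1) s))%N.
Proof.
elim: s => // a s IH; rewrite inE => /orP[/eqP->|/IH h] /=; first exact: leq_addr.
exact: leq_trans h (leq_addl _ _).
Qed.

Lemma C_pos (A : eqType) k (p : int -> A) M (a : nat) : (0 < a)%N ->
  beq k p (M - a%:Z) M -> (0 < C k p M a)%N.
Proof.
move=> a0 b; rewrite -has_count; apply/hasP; exists a => //.
by rewrite mem_iota; lia.
Qed.

Lemma fwd_uniq d (T : measurableType d) (A : finType) (X : int -> T -> A) k (n : nat) w j t t' :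
  is_tau X k (n + t)%N w j t -> is_tau X k (n + t')%N w j t' -> t = t'.
Proof.
wlog : t t' / (t <= t')%N.
  move=> H H1 H2; have [/H|/ltnW/H] := leqP t t'; first by apply.
  by move=> H'; symmetry; apply: H'.
move=> tt' /good_char [Ct bt] /good_char [Ct' bt'].
have [//|lt] : t = t' \/ (t < t')%N by lia.
case: bt' => [t0|bt']; first by lia.
have b : beq k (pw X w) (n%:Z + t%:Z) (n%:Z + t'%:Z).
  case: bt => [t0|bt]; first by rewrite t0 addr0.
  by rewrite -(beq_trans_l _ bt') beq_sym.
have E : n%:Z + t'%:Z - (t' - t)%N%:Z = n%:Z + t%:Z by lia.
have E2 : C k (pw X w) (n%:Z + t'%:Z) t' =
    (C k (pw X w) (n%:Z + t'%:Z) (t' - t) + C k (pw X w) (n%:Z + t%:Z) t)%N.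
  have -> : C k (pw X w) (n%:Z + t'%:Z) t' = C k (pw X w) (n%:Z + t'%:Z) ((t' - t) + t)%N.
    by rewrite subnK.
  by rewrite (C_add _ _ (a := (t' - t)%N)) E // b.
have := @C_pos A k (pw X w) (n%:Z + t'%:Z) (t' - t)%N.
rewrite E => /(_ ltac:(lia) b); move: E2; rewrite Ct Ct'; lia.
Qed.

Lemma tau_unit (T : Type) (A : eqType) (X : int -> T -> A) k n w j t :
  is_tau X k n w j t <-> is_tau (fun i (_ : unit) => X i w) k n tt j t.
Proof. by split; apply: tau_ext => u _; split => h. Qed.

Lemma tau_shift (T : Type) (A : eqType) (X : int -> T -> A) k (n m : nat) w j t :
  is_tau (fun i (_ : unit) => X (i + m%:Z) w) k n tt j t <-> is_tau X k (n + m)%N w j t.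
Proof.
have H u : block_match (fun i (_ : unit) => X (i + m%:Z) w) k n u tt <->
           block_match X k (n + m)%N u w.
  rewrite /block_match; split => h l lk.
    have E1 : (n + m)%N%:Z - u%:Z - l%:Z = n%:Z - u%:Z - l%:Z + m%:Z by lia.
    have E2 : (n + m)%N%:Z - l%:Z = n%:Z - l%:Z + m%:Z by lia.
    by rewrite E1 E2; apply: h.
  have E1 : (n + m)%N%:Z - u%:Z - l%:Z = n%:Z - u%:Z - l%:Z + m%:Z by lia.
  have E2 : (n + m)%N%:Z - l%:Z = n%:Z - l%:Z + m%:Z by lia.
  by rewrite -E1 -E2; apply: h.
by split; apply: tau_ext => u _; [|split => h]; [apply: H|apply/H|apply/H].
Qed.

Definition M0 (A : eqType) (s : seq (int * A)) := sumn (map (fun q : int * A => absz q.1) s).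
Arguments M0 {A}.

Definition Qt (A : eqType) k (n j t : nat) (s : seq (int * A)) (p : int -> A) : Prop :=
  is_tau (fun i (_ : unit) => p i) k n tt j t /\ all (fun q => p (n%:Z - t%:Z + q.1) == q.2) s.
Arguments Qt {A}.

Lemma Qt_local (A : eqType) k n j t (s : seq (int * A)) :
  local (n%:Z - t%:Z - k%:Z - (M0 s)%:Z) (t + k + 2 * M0 s + 1) (Qt k n j t s).
Proof.
move=> p q H [tau cy]; have W := win H; split.
  apply: (tau_ext _ tau) => u ut; rewrite /block_match; split => h l lk.
    have e1 : p (n%:Z - u%:Z - l%:Z) = q (n%:Z - u%:Z - l%:Z) by apply: W; lia.
    have e2 : p (n%:Z - l%:Z) = q (n%:Z - l%:Z) by apply: W; lia.
    by rewrite -e1 -e2; apply: h.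
  have e1 : p (n%:Z - u%:Z - l%:Z) = q (n%:Z - u%:Z - l%:Z) by apply: W; lia.
  have e2 : p (n%:Z - l%:Z) = q (n%:Z - l%:Z) by apply: W; lia.
  by rewrite e1 e2; apply: h.
apply/allP => x xs; have := allP cy x xs; have bx := @sumn_bound _ _ _ xs.
have hx : `|x.1| <= (M0 s)%:Z by rewrite -abszE lez_nat.
move: hx; rewrite ler_norml => /andP[hx1 hx2].
have k0 : 0 <= k%:Z by []. have t0 : 0 <= t%:Z by [].
rewrite W //; rewrite ?PoszD ?PoszM; lra.
Qed.

Theorem lemma1 (d : measure_display) (T : measurableType d) (R : realType)
  (P : probability T R) (A : finType) (X : int -> T -> A)
  (hmeas : forall (i : int) (a : A), measurable (X i @^-1` [set a]))
  (hstat : stationary P X)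
  (k n j : nat) (hk : (0 < k)%N) (s : seq (int * A)) :
  P [set w | exists t : nat, is_tau X k n w j t /\
               cyl (fun i => X (n%:Z - t%:Z + i)) s w]
  = P (cyl X s).
Proof.
pose St (t : nat) := [set w | Qt k n j t s (fun i => X i w)].
pose Ht (t : nat) := [set w | Qt k n j t s (fun i => X (i + t%:Z) w)].
have mS t : measurable (St t) by exact: (loc_measX0 hmeas (Qt_local A k n j t s)).
have mH t : measurable (Ht t) by exact: (loc_measX hmeas (Qt_local A k n j t s)).
have EPS t : P (St t) = P (Ht t).
  by symmetry; exact: (loc_stat hmeas hstat t%:Z (Qt_local A k n j t s)).
have ES : [set w | exists t : nat, is_tau X k n w j t /\
               cyl (fun i => X (n%:Z - t%:Z + i)) s w] = \bigcup_t St t.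
  apply/seteqP; split => w /=.
    by move=> [t [Htau cw]]; exists t => //; split; [exact: ((tau_unit _ _ X k n w j t).1 Htau)|exact: cw].
  by move=> [t _ [Htau cw]]; exists t; split; [exact: ((tau_unit _ _ X k n w j t).2 Htau)|exact: cw].
have HtE t : Ht t = [set w | is_tau X k (n + t)%N w j t /\ cyl (fun i => X (n%:Z + i)) s w].
  have E x : n%:Z - t%:Z + x + t%:Z = n%:Z + x by lra.
  have EA w : all (fun q => X (n%:Z - t%:Z + q.1 + t%:Z) w == q.2) s =
              all (fun q => X (n%:Z + q.1) w == q.2) s.
    by apply: eq_all => x /=; rewrite E.
  apply/seteqP; split => w /= [h1 h2]; split.
  - exact: ((tau_shift _ _ X k n t w j t).1 h1).
  - by move: h2; rewrite /cyl /= EA.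
  - exact: ((tau_shift _ _ X k n t w j t).2 h1).
  - by move: h2; rewrite /Qt /cyl /= EA.
have tS : trivIset setT St.
  move=> t t' _ _ [w [[h1 _] [h2 _]]]; exact: tau_uniq h1 h2.
have tH : trivIset setT Ht.
  move=> t t' _ _ [w []]; rewrite !HtE => -[h1 _] [h2 _]; exact: fwd_uniq h1 h2.
rewrite ES; transitivity (P (\bigcup_t Ht t)).
  rewrite (measure_bigcup P setT St (fun i _ => mS i) tS).
  rewrite (measure_bigcup P setT Ht (fun i _ => mH i) tH).
  by congr (lim (_ @ \oo)); apply/funext => N; apply: eq_bigr => i _; exact: EPS.
pose cy := cyl (fun i => X (n%:Z + i)) s.
have mcy : measurable cy by apply: cyl_meas => i a; apply: hmeas.
have mHb : measurable (\bigcup_t Ht t) by apply: bigcupT_measurable.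
have Hsub : \bigcup_t Ht t `<=` cy by move=> w [t _]; rewrite HtE => -[].
have Hrest : cy `\` \bigcup_t Ht t `<=` [set w | ~ Good X k j n w].
  move=> w [cw nH] [t Gt]; apply: nH; exists t => //; rewrite HtE; split; [exact: Gt|exact: cw].
rewrite -(hstat s n%:Z).
have -> : cyl (fun i => X (i + n%:Z)) s = cy.
  by rewrite /cy; congr cyl; apply: funext => i; rewrite addrC.
have mD : measurable (cy `\` \bigcup_t Ht t) by apply: measurableD.
rewrite -(setDUK Hsub) measureU //; last first.
  by apply/seteqP; split => w // [h1 [_ h2]].
rewrite (measure_negligible mD) ?adde0 //.
exact: (negligibleS Hrest (negl_bad hmeas hstat k j n)).
Qed.
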